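(* Let $\Lambda\subset\mathbb Z^n$ be a sublattice with a basis $S=\{v_1,\ldots,v_n\}$ which is non-acute. Let $k_1,\ldots,k_n$ be the unique integers with $W:=\sum_{i=1}^n v_i=\sum_{i=1}^n k_ie_i$, and let $R_o=\{i : k_i\equiv 1 \pmod 2\}$. If $$\sum_{i=1}^n k_i^2>4n-3|R_o|,$$ then $\Lambda$ is not cubiquitous.
   Context: $\mathbb Z^n$ carries the standard dot product $\langle\cdot,\cdot\rangle$ with standard basis $e_1,\ldots,e_n$. A set $S=\{v_1,\ldots,v_n\}\subset\mathbb Z^n$ is non-acute if $a_i:=\langle v_i,v_i\rangle\ge 1$ for all $i$, $\langle v_i,v_j\rangle\le 0$ for all $i\ne j$, and $a_i\ge -\sum_{j\ne i}\langle v_j,v_i\rangle$ for all $i$. A full-rank sublattice $\Lambda\subset\mathbb Z^n$ is cubiquitous if $\Lambda\cap(x+\{0,1\}^n)\ne\emptyset$ for every $x\in\mathbb Z^n$. *)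

(* Defs.v *)
From mathcomp Require Import all_boot all_order all_algebra.
Set Implicit Arguments. Unset Strict Implicit. Unset Printing Implicit Defensive.
Import Order.TTheory GRing.Theory Num.Theory.
Local Open Scope ring_scope.

Definition dot (n : nat) (u w : 'I_n -> int) : int := \sum_(j < n) u j * w j.

Definition lin_indep (n : nat) (v : 'I_n -> 'I_n -> int) : Prop :=
  forall c : 'I_n -> int,
    (forall j : 'I_n, \sum_(i < n) c i * v i j = 0) -> forall i, c i = 0.

Definition in_lattice (n : nat) (v : 'I_n -> 'I_n -> int) (y : 'I_n -> int) : Prop :=
  exists c : 'I_n -> int, forall j : 'I_n, y j = \sum_(i < n) c i * v i j.

Definition non_acute (n : nat) (v : 'I_n -> 'I_n -> int) : Prop :=
  (forall i, 1 <= dot (v i) (v i)) /\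
  (forall i j, i != j -> dot (v i) (v j) <= 0) /\
  (forall i, - \sum_(j < n | j != i) dot (v j) (v i) <= dot (v i) (v i)).

Definition cubiquitous (n : nat) (L : ('I_n -> int) -> Prop) : Prop :=
  forall x : 'I_n -> int, exists y : 'I_n -> int,
    L y /\ forall j : 'I_n, y j - x j = 0 \/ y j - x j = 1.

Definition Wcoord (n : nat) (v : 'I_n -> 'I_n -> int) (j : 'I_n) : int :=
  \sum_(i < n) v i j.

Definition R_odd (n : nat) (v : 'I_n -> 'I_n -> int) : {set 'I_n} :=
  [set j : 'I_n | (Wcoord v j %% 2)%Z == 1].

(* Main.v *)
Require Import Defs.
From mathcomp Require Import all_boot all_order all_algebra.
From mathcomp Require Import zify ring lra.
Import Order.TTheory GRing.Theory Num.Theory.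
Local Open Scope ring_scope.

Lemma dotC n (u w : 'I_n -> int) : dot u w = dot w u.
Proof. by apply: eq_bigr => j _; rewrite mulrC. Qed.

Lemma quad n (v : 'I_n -> 'I_n -> int) (s : 'I_n -> int) :
  \sum_(j < n) (\sum_(i < n) s i * v i j) ^+ 2 =
  \sum_(i < n) \sum_(i' < n) s i * s i' * dot (v i) (v i').
Proof.
under eq_bigr => j _ do rewrite expr2 mulr_suml.
under eq_bigr => j _ do under eq_bigr => i _ do rewrite mulr_sumr.
rewrite exchange_big /=; apply: eq_bigr => i _.
rewrite exchange_big /=; apply: eq_bigr => i' _.
rewrite /dot mulr_sumr; apply: eq_bigr => j _; ring.
Qed.

Lemma colsum n (v : 'I_n -> 'I_n -> int) : non_acute v ->
  forall i, 0 <= \sum_(j < n) dot (v j) (v i).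
Proof.
move=> [_ [_ H]] i; rewrite (bigD1 i) //=; have := H i; lra.
Qed.

Lemma qineq n (v : 'I_n -> 'I_n -> int) (s : 'I_n -> int) : non_acute v ->
  (forall i, 1 <= s i ^+ 2) ->
  \sum_(i < n) \sum_(i' < n) dot (v i) (v i') <=
  \sum_(i < n) \sum_(i' < n) s i * s i' * dot (v i) (v i').
Proof.
move=> na hs; have [_ [hneg _]] := na.
set G := fun i i' => dot (v i) (v i').
rewrite -subr_ge0 -sumrB.
under eq_bigr => i _ do rewrite -sumrB.
suff : 0 <= 2 * \sum_(i < n) \sum_(i' < n) (s i * s i' * G i i' - G i i').
  by rewrite pmulr_rge0.
rewrite mulr_sumr.
apply: (@le_trans _ _ (\sum_(i < n) \sum_(i' < n)
          (G i i' * (s i ^+ 2 - 1) + G i i' * (s i' ^+ 2 - 1)))).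
  under eq_bigr => i _ do rewrite big_split /=.
  rewrite big_split /= [X in _ + X]exchange_big /= -big_split /=.
  apply: sumr_ge0 => i _.
  have E : \sum_(i' < n) G i i' * (s i ^+ 2 - 1) = (s i ^+ 2 - 1) * \sum_(j < n) G j i.
    rewrite mulr_sumr; apply: eq_bigr => j _; rewrite /G dotC; ring.
  have E2 : \sum_(i' < n) G i' i * (s i ^+ 2 - 1) = (s i ^+ 2 - 1) * \sum_(j < n) G j i.
    rewrite mulr_sumr; apply: eq_bigr => j _; ring.
  rewrite E E2; have := @colsum n v na i; have := hs i; rewrite /G; nra.
apply: ler_sum => i _; rewrite mulr_sumr; apply: ler_sum => i' _.
have := hneg i i'; case: eqVneq => [<- _|ne /(_ isT) h].
  rewrite le_eqVlt; apply/orP; left; apply/eqP; rewrite expr2; ring.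
rewrite -/(G i i') in h.
have h3 : G i i' * (s i - s i') ^+ 2 <= 0 by rewrite mulr_le0_ge0 // sqr_ge0.
have e : 2 * (s i * s i' * G i i' - G i i') - (G i i' * (s i ^+ 2 - 1) + G i i' * (s i' ^+ 2 - 1)) = - (G i i' * (s i - s i') ^+ 2) by ring.
by rewrite -subr_ge0 e oppr_ge0.
Qed.
Lemma perj (kk yy : int) : (yy - (kk %/ 2)%Z = 0 \/ yy - (kk %/ 2)%Z = 1) ->
   (2 * yy - kk) ^+ 2 <= (if (kk %% 2)%Z == 1 then 1 else 4).
Proof.
move=> h.
have e := divz_eq kk 2.
have r0 : (0 <= kk %% 2)%Z by rewrite modz_ge0.
have r1 : (kk %% 2 < 2)%Z by rewrite ltz_pmod.
move: e r0 r1 h; set q := (kk %/ 2)%Z; set r := (kk %% 2)%Z => e r0 r1 h.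
have : r = 0 \/ r = 1 by lia.
case=> hr; rewrite hr /=; case: h => h; have -> : yy = q + (yy - q) by ring.
all: rewrite h e hr expr2; lia.
Qed.
Lemma sq1 (c : int) : 1 <= (2 * c - 1) ^+ 2.
Proof. rewrite expr2; nia. Qed.
Lemma cnt n (R : {set 'I_n}) :
  \sum_(j < n) (if j \in R then 1 else 4 : int) = 4 * n%:Z - 3 * #|R|%:Z.
Proof.
rewrite (bigID (mem R)) /=.
under eq_bigr => j /= -> do [].
under [X in _ + X]eq_bigr => j /negbTE -> do [].
rewrite !sumr_const.
have h := cardC R; rewrite card_ord in h.
rewrite [X in 4 *+ X](_ : _ = #|[predC R]|); last by apply: eq_card.
have -> : (n%:Z) = #|R|%:R + #|[predC R]|%:R by rewrite -natrD h natz.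
rewrite -mulr_natr; lra.
Qed.

Theorem proposition1p4 (n : nat) (v : 'I_n -> 'I_n -> int) :
  lin_indep v -> non_acute v ->
  \sum_(j < n) Wcoord v j ^+ 2 > 4 * (n%:Z) - 3 * (#|R_odd v|%:Z) ->
  ~ cubiquitous (in_lattice v).
Proof.
move=> _ na hk hc.
have [y [[c hy] hyx]] := hc (fun j => (Wcoord v j %/ 2)%Z).
pose s := fun i => 2 * c i - 1.
have hd : forall j, 2 * y j - Wcoord v j = \sum_(i < n) s i * v i j.
  move=> j; rewrite hy /Wcoord mulr_sumr -sumrB; apply: eq_bigr => i _; rewrite /s; ring.
have hW : forall j, Wcoord v j = \sum_(i < n) 1 * v i j.
  by move=> j; apply: eq_bigr => i _; rewrite mul1r.
have B : \sum_(j < n) Wcoord v j ^+ 2 <= \sum_(j < n) (2 * y j - Wcoord v j) ^+ 2.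
  rewrite (eq_bigr _ (fun j _ => congr1 (fun x => x ^+ 2) (hd j))).
  rewrite (eq_bigr _ (fun j _ => congr1 (fun x => x ^+ 2) (hW j))) !quad.
  under eq_bigr => i _ do under eq_bigr => i' _ do rewrite !mul1r.
  apply: qineq => // i; exact: sq1.
have A : \sum_(j < n) (2 * y j - Wcoord v j) ^+ 2 <= 4 * (n%:Z) - 3 * (#|R_odd v|%:Z).
  rewrite -cnt; apply: ler_sum => j _; rewrite /R_odd inE; exact: perj.
have := le_lt_trans (le_trans B A) hk; by rewrite ltxx.
Qed.
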